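(* Let $G$ be a finite group and let $\pi$ be a set of primes. Then \[|\mathrm{Ord}(G,\pi)|\ \ge \prod_{C \text{ a chief factor of } G} f_\pi(C),\] where the product is over the chief factors of a chief series of $G$ (with multiplicity).
   Context: For a subset $X$ of a finite group and a set $\pi$ of primes, $\mathrm{Ord}(X,\pi)$ is the set of $\pi$-elements of $X$ (elements all of whose order's prime divisors lie in $\pi$). For $G=S^t$ a direct power of a simple group $S$, define $f_\pi(G)=1$ if $S$ is an abelian $\pi'$-group; $f_\pi(G)=|G|$ if $G$ is an abelian $\pi$-group; and, if $S$ is nonabelian, $f_\pi(G)=\min\{|\mathrm{Ord}(G\alpha,\pi)| : \alpha\in\mathrm{Ord}(\mathrm{Aut}(G),\pi)\}$, where the coset $G\alpha$ is viewed as a subset of $\mathrm{Aut}(G)$ (with $G$ identified with $\mathrm{Inn}(G)$). Every chief factor of a finite group is of the form $S^t$. *)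

(* Defs.v *)
From mathcomp Require Import all_boot all_fingroup all_solvable.
Set Implicit Arguments. Unset Strict Implicit. Unset Printing Implicit Defensive.
Local Open Scope group_scope.

Definition Ord (gT : finGroupType) (X : {set gT}) (pi : nat_pred) : {set gT} :=
  [set x in X | pi.-elt x].

Definition Inn (gT : finGroupType) (C : {group gT}) : {set {perm gT}} :=
  [set conj_aut C x | x in C].

(* Abelian case: C is an elementary abelian p-group, hence either a
   pi-group (value |C|) or a pi'-group (value 1).  The minimum is
   taken with seed #|C|, which is harmless: alpha = 1 is a pi-element and the
   coset Inn(C) * 1 has at most #|C| elements. *)
Definition fpi (pi : nat_pred) (gT : finGroupType) (C : {group gT}) : nat :=
  if abelian C then (if pi.-group C then #|C| else 1%N)
  else \big[minn/#|C|]_(a in Aut C | pi.-elt a) #|Ord (Inn C :* a) pi|.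

Definition fpi_factor (pi : nat_pred) (gT : finGroupType)
  (VU : {group gT} * {group gT}) : nat :=
  fpi pi (VU.2 / VU.1)%G.

(* Main.v *)
Require Import Defs.
From mathcomp Require Import all_boot all_fingroup all_solvable.
Set Implicit Arguments. Unset Strict Implicit. Unset Printing Implicit Defensive.
Local Open Scope group_scope.

Lemma bigminn_le (I : finType) (x : nat) (P : pred I) (F : I -> nat) j :
  P j -> (\big[minn/x]_(i | P i) F i <= F j)%N.
Proof.
move=> Pj.
have: j \in index_enum I by rewrite mem_index_enum.
elim: (index_enum I) => [//|a r IH]; rewrite inE big_cons.
case/predU1P=> [<-|jr]; first by rewrite Pj geq_minl.
by case: (P a); rewrite ?(leq_trans (geq_minr _ _)) ?IH.
Qed.

Lemma Ord_isog (gT hT : finGroupType) (A : {group gT}) (B : {group hT}) pi :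
  A \isog B -> #|Ord A pi| = #|Ord B pi|.
Proof.
case/isogP=> f injf <-.
have sOA : Ord A pi \subset A by apply/subsetP=> x; rewrite inE => /andP[].
rewrite -(card_injm injf sOA).
suff ->: Ord (f @* A) pi = f @* Ord A pi by [].
apply/setP=> y; rewrite !inE.
apply/andP/morphimP.
  case=> /morphimP[x Ax _ ->] py; exists x => //.
  by rewrite inE Ax /p_elt -(order_injm injf Ax).
case=> x Ax; rewrite inE => /andP[_ px] ->; split; first exact: mem_morphim.
by rewrite /p_elt (order_injm injf Ax).
Qed.

Lemma elt_coset (gT : finGroupType) (N : {group gT}) pi x :
  x \in 'N(N) -> pi.-elt (coset N x) -> x.`_pi^' \in N.
Proof.
move=> Nx px.
have Nx' : x.`_pi^' \in 'N(N).
  by apply: (subsetP _ _ (cycle_constt _ x)); rewrite cycle_subG.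
apply: coset_idr => //.
rewrite (morph_constt (coset_morphism N)) //=.
by apply/constt1P; rewrite p_eltNK.
Qed.

Lemma constt_in_coset (gT : finGroupType) (N : {group gT}) pi x :
  x \in 'N(N) -> pi.-elt (coset N x) -> x.`_pi \in N :* x.
Proof.
move=> Nx px; rewrite norm_rlcoset // mem_lcoset.
rewrite -{1}(consttC pi x) invMg mulgKV groupV.
exact: elt_coset.
Qed.

Lemma coset_rcoset (gT : finGroupType) (G N : {group gT}) y x :
  N <| G -> y \in G -> x \in N :* y -> x \in G /\ coset N x = coset N y.
Proof.
case/andP=> sNG nNG Gy /rcosetP[n Nn ->].
have Nn' : n \in 'N(N) by rewrite (subsetP nNG) ?(subsetP sNG).
have Ny : y \in 'N(N) by rewrite (subsetP nNG).
split; first by apply: groupM => //; apply: (subsetP sNG).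
by rewrite morphM //= coset_id // mul1g.
Qed.

Lemma key_fiber (gT : finGroupType) (G N : {group gT}) pi y :
  N <| G -> y \in G -> pi.-elt (coset N y) ->
  (fpi pi N <= #|Ord (N :* y) pi|)%N.
Proof.
move=> nNG Gy py.
have NG : G \subset 'N(N) := normal_norm nNG.
have Ny := subsetP NG y Gy.
have Nyz : y.`_pi \in N :* y := constt_in_coset Ny py.
have pz : pi.-elt y.`_pi := p_elt_constt pi y.
have Oz : y.`_pi \in Ord (N :* y) pi by rewrite inE Nyz.
have [Gz _] := coset_rcoset nNG Gy Nyz.
have Nz := subsetP NG _ Gz.
rewrite /fpi; case: ifP => abN.
  case: ifP => piN; last by apply/card_gt0P; exists y.`_pi.
  rewrite -(card_rcoset N y); apply: subset_leq_card.
  apply/subsetP=> x Nyx; rewrite inE Nyx /=.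
  have [Gx cx] := coset_rcoset nNG Gy Nyx.
  have Nx := subsetP NG x Gx.
  have px : pi.-elt (coset N x) by rewrite cx.
  have x'N := elt_coset Nx px.
  have p1 : pi.-elt x.`_pi^' := mem_p_elt piN x'N.
  have p2 : (pi^').-elt x.`_pi^' := p_elt_constt _ x.
  have /eqP : x.`_pi^' = 1 by apply/eqP; rewrite -order_eq1; apply/eqP/(pnat_1 p1 p2).
  by move/eqP/constt1P; rewrite p_eltNK.
set a := conj_aut N y.`_pi.
have Aa : a \in Aut N.
  by apply: (subsetP (Aut_conj_aut N G)); apply: mem_morphim.
have pa : pi.-elt a := morph_p_elt _ Nz pz.
apply: leq_trans (@bigminn_le _ _ _ _ a _) _; first by rewrite Aa pa.
apply: leq_trans (leq_imset_card (conj_aut N) (Ord (N :* y) pi)).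
apply: subset_leq_card; apply/subsetP => b; rewrite inE /Inn.
case/andP=> /rcosetP[c /imsetP[n Nn ->] ->] pb.
have Nn' : n \in 'N(N) by rewrite (subsetP NG) ?(subsetP (normal_sub nNG)).
move: pb; rewrite /a -conj_aut_morphM // => pb.
have Nyx : n * y.`_pi \in N :* y.
  by rewrite -(rcoset_eqP Nyz); apply/rcosetP; exists n.
have [Gx cx] := coset_rcoset nNG Gy Nyx.
have Nx := subsetP NG _ Gx.
have px : pi.-elt (coset N (n * y.`_pi)) by rewrite cx.
have Nyw : (n * y.`_pi).`_pi \in N :* y.
  by rewrite -(rcoset_eqP Nyx); apply: constt_in_coset.
apply/imsetP; exists (n * y.`_pi).`_pi; first by rewrite inE Nyw p_elt_constt.
have := morph_constt (conj_aut_morphism N) pi Nx.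
move=> E; rewrite [RHS]E /=. exact: (esym (constt_p_elt pb)).
Qed.

Lemma fiber_sum (gT : finGroupType) (G N : {group gT}) pi :
  N <| G -> (fpi pi N * #|Ord (G / N) pi| <= #|Ord G pi|)%N.
Proof.
move=> nNG.
rewrite -[#|Ord G pi|]sum1_card (partition_big (coset N) (mem (G / N))) /=; last first.
  by move=> x; rewrite inE => /andP[Gx _]; apply: mem_quotient.
rewrite mulnC -sum_nat_const.
rewrite [X in (X <= _)%N]big_mkcond [X in (_ <= X)%N]big_mkcond /=.
apply: leq_sum => c _.
case: ifP => //; rewrite inE => /andP[Gc pc]; rewrite Gc.
case/morphimP: Gc => y Ny Gy Ec.
rewrite sum1dep_card.
apply: leq_trans (key_fiber nNG Gy _) _; first by rewrite -Ec.
apply: subset_leq_card; apply/subsetP => x; rewrite !inE => /andP[Nyx px].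
have [Gx cx] := coset_rcoset nNG Gy Nyx.
by rewrite Gx px cx Ec eqxx.
Qed.

Lemma main_gen (gT : finGroupType) (G : {group gT}) (pi : nat_pred) (s : seq {group gT})
  (V : {group gT}) :
  V <| G -> (G.-chief).-series V s -> last V s = G ->
  (\prod_(VU <- zip (V :: s) s) fpi_factor pi VU <= #|Ord (G / V) pi|)%N.
Proof.
elim: s V => [|U s IH] V nVG /=.
  move=> _ <-; rewrite big_nil; apply/card_gt0P; exists 1.
  by rewrite inE group1 p_elt1.
case/andP=> chVU pUs lUs; rewrite big_cons /=.
have /andP[mVU nUG] := chVU.
have sVU := maxnormal_sub mVU.
apply: leq_trans (leq_mul (leqnn _) (IH U nUG pUs lUs)) _.
rewrite -(Ord_isog pi (third_isog sVU nVG nUG)).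
exact: (fiber_sum pi (quotient_normal V nUG)).
Qed.

Theorem lemma2p1 (gT : finGroupType) (G : {group gT}) (pi : nat_pred)
  (s : seq {group gT}) :
  (G.-chief).-series 1%G s -> last 1%G s = G ->
  (\prod_(VU <- zip (1%G :: s) s) fpi_factor pi VU <= #|Ord G pi|)%N.
Proof.
move=> ps ls.
rewrite (Ord_isog pi (quotient1_isog G)).
exact: (main_gen pi (normal1 G) ps ls).
Qed.
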